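(* Let $d$ be a feasible integer and let $P\in\mathbb F[\lambda]$ be any monic polynomial of degree $d$. Then there exists a standard $U_q(\widehat{\mathfrak{sl}}_2)$-module $V$ of diameter $d$ with $P_V=P$.
   Context: Let $\mathbb F$ be an algebraically closed field and fix nonzero $q\in\mathbb F$ with $q^2\ne1$; write $[n]_q=(q^n-q^{-n})/(q-q^{-1})$. $U_q(\widehat{\mathfrak{sl}}_2)$ is the associative unital $\mathbb F$-algebra with generators $e_i^{\pm},K_i^{\pm1}$ ($i\in\{0,1\}$) and relations $K_iK_i^{-1}=K_i^{-1}K_i=1$, $K_0K_1=K_1K_0$, $K_ie_i^{\pm}K_i^{-1}=q^{\pm2}e_i^{\pm}$, $K_ie_j^{\pm}K_i^{-1}=q^{\mp2}e_j^{\pm}$ ($i\ne j$), $e_i^+e_i^--e_i^-e_i^+=(K_i-K_i^{-1})/(q-q^{-1})$, $e_0^{\pm}e_1^{\mp}=e_1^{\mp}e_0^{\pm}$, and $(e_i^\pm)^3e_j^\pm-[3]_q(e_i^\pm)^2e_j^\pm e_i^\pm+[3]_qe_i^\pm e_j^\pm(e_i^\pm)^2-e_j^\pm(e_i^\pm)^3=0$ ($i\ne j$). Tensor products of modules are formed via $e_i^+(v\otimes w)=e_i^+v\otimes K_iw+v\otimes e_i^+w$, $e_i^-(v\otimes w)=e_i^-v\otimes w+K_i^{-1}v\otimes e_i^-w$, $K_i(v\otimes w)=K_iv\otimes K_iw$. For nonzero $\alpha\in\mathbb F$, $V(\alpha)$ is the module with basis $x,y$ and $K_1x=qx$, $K_1y=q^{-1}y$,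 $e_1^-x=y$, $e_1^-y=0$, $e_1^+x=0$, $e_1^+y=x$, $K_0x=q^{-1}x$, $K_0y=qy$, $e_0^-x=0$, $e_0^-y=q\alpha^{-1}x$, $e_0^+x=q^{-1}\alpha y$, $e_0^+y=0$. A standard module of diameter $d$ is $V(\alpha_1)\otimes\cdots\otimes V(\alpha_d)$ with all $\alpha_i\in\mathbb F$ nonzero (for $d=0$: the trivial module, on which each $e_i^\pm$ acts as $0$ and each $K_i^{\pm1}$ as $1$). An integer $d$ is feasible if $d\ge0$ and $q^{2i}\ne1$ for $1\le i\le d$. For a standard $V$ of diameter $d$, $U_0$ is the $1$-dimensional span of $x\otimes\cdots\otimes x$. Fix nonzero $b,c,b^*,c^*\in\mathbb F$ and $u,v,u^*,v^*\in\mathbb F$ with $uv^*=-bb^*q^{-1}(q-q^{-1})^2$ and $vu^*=-cc^*q^{-1}(q-q^{-1})^2$; set $R=ue_0^++ve_1^-K_1$ and $L=u^*e_1^++v^*e_0^-K_0$. For a standard module $V$ of feasible diameter $d$ and $0\le i\le d$, $\zeta_i$ is the scalar by which $L^iR^i$ acts on $U_0$, and $\sigma_i=\zeta_i/\prod_{k=1}^i(q^k-q^{-k})^2$. For $i\ge0$ let $f_i=bb^*q^{-2i}+cc^*q^{2i}-\lambda\in\mathbb F[\lambda]$. The Drinfel'd polynomial of $V$ is the monic degree-$d$ polynomial $P_V=(-1)^d\sum_{i=0}^d\sigma_{d-i}f_0f_1\cdots f_{i-1}$. *)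

(* Defs.v *)
From HB Require Import structures.
From mathcomp Require Import all_boot all_order all_algebra.
Set Implicit Arguments. Unset Strict Implicit. Unset Printing Implicit Defensive.
Import Order.TTheory GRing.Theory.
Local Open Scope ring_scope.

(* Conventions: a linear operator on an n-dimensional space with a fixed
   ordered basis is an n x n matrix M acting on COLUMN vectors, i.e.
   M i j = coefficient of basis vector i in the image of basis vector j.
   V(alpha) has ordered basis (x, y): index 0 = x, index 1 = y. *)

Section StandardModules.
Variable F : fieldType.
Variable q : F.

(* Kronecker product A (x) B for A acting on a 2-dim space; basis of the
   tensor product ordered as x(x)w_1,...,x(x)w_n, y(x)w_1,...,y(x)w_n. *)
Definition kron2 n (A : 'M[F]_2) (B : 'M[F]_n) : 'M[F]_(n + n) :=
  block_mx (A ord0 ord0 *: B) (A ord0 ord_max *: B)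
           (A ord_max ord0 *: B) (A ord_max ord_max *: B).

Definition Kmat (k : F) : 'M[F]_2 :=
  \matrix_(i < 2, j < 2) if i == j then (if i == ord0 then k else k^-1) else 0.
(* the map x |-> c y, y |-> 0 *)
Definition lowmx (c : F) : 'M[F]_2 :=
  \matrix_(i < 2, j < 2) if (i == ord_max) && (j == ord0) then c else 0.
(* the map x |-> 0, y |-> c x *)
Definition upmx (c : F) : 'M[F]_2 :=
  \matrix_(i < 2, j < 2) if (i == ord0) && (j == ord_max) then c else 0.

Definition VK1 : 'M[F]_2 := Kmat q.
Definition VK1inv : 'M[F]_2 := Kmat q^-1.
Definition VK0 : 'M[F]_2 := Kmat q^-1.
Definition VK0inv : 'M[F]_2 := Kmat q.
Definition Ve1m : 'M[F]_2 := lowmx 1.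
Definition Ve1p : 'M[F]_2 := upmx 1.
Definition Ve0m (a : F) : 'M[F]_2 := upmx (q * a^-1).
Definition Ve0p (a : F) : 'M[F]_2 := lowmx (q^-1 * a).

(* The standard module V(a_1) (x) ... (x) V(a_d), for s = [:: a_1; ...; a_d],
   built as V(a_1) (x) (V(a_2) (x) ( ... )) ; the empty product is the
   trivial 1-dimensional module. *)
Fixpoint sdim (s : seq F) : nat :=
  if s is _ :: t then (sdim t + sdim t)%N else 1%N.

(* action of K (given its matrix on V(alpha), independent of alpha) *)
Fixpoint stK (K : 'M[F]_2) (s : seq F) : 'M[F]_(sdim s) :=
  match s return 'M[F]_(sdim s) with
  | [::] => 1%:M
  | _ :: t => kron2 K (stK K t)
  end.

(* e^+(v (x) w) = e^+ v (x) K w + v (x) e^+ w *)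
Fixpoint stEp (E : F -> 'M[F]_2) (K : 'M[F]_2) (s : seq F) : 'M[F]_(sdim s) :=
  match s return 'M[F]_(sdim s) with
  | [::] => 0
  | a :: t => kron2 (E a) (stK K t) + kron2 1%:M (stEp E K t)
  end.

(* e^-(v (x) w) = e^- v (x) w + K^-1 v (x) e^- w *)
Fixpoint stEm (E : F -> 'M[F]_2) (Kinv : 'M[F]_2) (s : seq F) : 'M[F]_(sdim s) :=
  match s return 'M[F]_(sdim s) with
  | [::] => 0
  | a :: t => kron2 (E a) 1%:M + kron2 Kinv (stEm E Kinv t)
  end.

Definition st_K0 s := stK VK0 s.
Definition st_K1 s := stK VK1 s.
Definition st_e0p s := stEp Ve0p VK0 s.
Definition st_e1p s := stEp (fun _ => Ve1p) VK1 s.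
Definition st_e0m s := stEm Ve0m VK0inv s.
Definition st_e1m s := stEm (fun _ => Ve1m) VK1inv s.

(* the vector x (x) ... (x) x spanning U_0 *)
Fixpoint u0vec (s : seq F) : 'cV[F]_(sdim s) :=
  match s return 'cV[F]_(sdim s) with
  | [::] => 1%:M
  | _ :: t => col_mx (u0vec t) 0
  end.

Variables (u v us vs : F).

Definition Rop s : 'M[F]_(sdim s) := u *: st_e0p s + v *: (st_e1m s *m st_K1 s).
Definition Lop s : 'M[F]_(sdim s) := us *: st_e1p s + vs *: (st_e0m s *m st_K0 s).

(* zeta_i : the scalar by which L^i R^i acts on U_0, i.e. the coefficient
   of x(x)...(x)x in L^i R^i (x(x)...(x)x). *)
Definition zeta s (i : nat) : F :=
  let w : 'cV[F]_(sdim s) :=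
    iter i (fun x : 'cV[F]_(sdim s) => Lop s *m x)
      (iter i (fun x : 'cV[F]_(sdim s) => Rop s *m x) (u0vec s)) in
  ((u0vec s)^T *m w) ord0 ord0.

Definition sigma s (i : nat) : F :=
  zeta s i / \prod_(1 <= k < i.+1) (q ^+ k - q ^- k) ^+ 2.

Variables (b c bs cs : F).

Definition fpoly (i : nat) : {poly F} :=
  (b * bs * q ^- (2 * i) + c * cs * q ^+ (2 * i))%:P - 'X.

Definition drinfeld_poly (s : seq F) : {poly F} :=
  let d := size s in
  (-1) ^+ d *: \sum_(i < d.+1) (sigma s (d - i) *: \prod_(j < i) fpoly j).

End StandardModules.

Definition feasible (F : fieldType) (q : F) (d : nat) : Prop :=
  forall i : nat, (1 <= i <= d)%N -> q ^+ (2 * i) != 1.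

(* Main.v *)
Require Import Defs.
From HB Require Import structures.
From mathcomp Require Import all_boot all_order all_algebra.
From Stdlib Require Import Ring Field.
Import GRing.Theory.
Local Open Scope ring_scope.
Section S.
Variable F : fieldType.
Definition addF (x y : F) : GRing.PzSemiRing.sort F := x + y.
Definition mulF (x y : F) : GRing.PzSemiRing.sort F := x * y.
Definition oppF (x : F) : GRing.PzSemiRing.sort F := - x.
Definition subF (x y : F) : GRing.PzSemiRing.sort F := x - y.
Definition invF (x : F) : GRing.PzSemiRing.sort F := x^-1.
Definition divF (x y : F) : GRing.PzSemiRing.sort F := x / y.
Definition zeroF : GRing.PzSemiRing.sort F := 0.
Definition oneF : GRing.PzSemiRing.sort F := 1.
Lemma Fring : @ring_theory (GRing.PzSemiRing.sort F) zeroF oneF addF mulF subF oppF eq.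
Proof. rewrite /addF /mulF /subF /oppF /zeroF /oneF.
split=> *; rewrite ?add0r ?addrA ?mul1r ?mulrA ?mulrDl ?subrr //; first exact: addrC; exact: mulrC. Qed.
Lemma Ffield : @field_theory (GRing.PzSemiRing.sort F) zeroF oneF addF mulF subF oppF divF invF eq.
Proof. split; [exact Fring| exact/eqP/oner_neq0 | by [] | move=> p /eqP; exact: mulVf]. Qed.
End S.
Arguments addF {F}. Arguments subF {F}. Arguments mulF {F}. Arguments divF {F}. Arguments oppF {F}. Arguments invF {F}.
Lemma addFE {F : fieldType} (x y : F) : x + y = addF x y. Proof. by []. Qed.
Lemma subFE {F : fieldType} (x y : F) : x - y = subF x y. Proof. by []. Qed.
Lemma mulFE {F : fieldType} (x y : F) : x * y = mulF x y. Proof. by []. Qed.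
Lemma divFE {F : fieldType} (x y : F) : x / y = divF x y. Proof. by []. Qed.
Lemma oppFE {F : fieldType} (x : F) : - x = oppF x. Proof. by []. Qed.
Lemma invFE {F : fieldType} (x : F) : x^-1 = invF x. Proof. by []. Qed.
Lemma zeroFE {F : fieldType} : 0 = zeroF F. Proof. by []. Qed.
Lemma oneFE {F : fieldType} : 1 = oneF F. Proof. by []. Qed.
Ltac foldF := rewrite ?subFE ?divFE; rewrite ?addFE ?mulFE ?oppFE ?invFE ?zeroFE ?oneFE.
Lemma Ffield2 (F : fieldType) : @field_theory (GRing.Field.sort F) (zeroF F) (oneF F) addF mulF subF oppF divF invF eq.
Proof. exact: Ffield. Qed.

Set Implicit Arguments. Unset Strict Implicit.

Section PolyStep.
Variable F : fieldType.
Lemma poly_step (s s' : nat -> F) (phi : nat -> F) th n :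
  s n.+1 = 0 -> s' 0%N = s 0%N ->
  (forall i, (i <= n)%N -> s' i.+1 = s i.+1 + (th - phi (n - i)%N) * s i) ->
  \sum_(i < n.+2) s' (n.+1 - i)%N *: \prod_(j < i) ((phi j)%:P - 'X) =
  (th%:P - 'X) * \sum_(i < n.+1) s (n - i)%N *: \prod_(j < i) ((phi j)%:P - 'X).
Proof.
move=> hbig h0 hrec.
set Fp := fun i : nat => \prod_(j < i) ((phi j)%:P - 'X).
have FpS i : Fp i.+1 = Fp i * ((phi i)%:P - 'X) by rewrite /Fp big_ord_recr.
rewrite -(big_mkord xpredT (fun i => s' (n.+1 - i)%N *: Fp i)).
rewrite -(big_mkord xpredT (fun i => s (n - i)%N *: Fp i)).
rewrite big_nat_recr //= subnn.
rewrite (@eq_big_nat _ _ _ 0 n.+1 _ (fun i => s (n - i).+1 *: Fp i +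
   (s (n - i)%N *: ((th%:P - 'X) * Fp i) - s (n - i)%N *: Fp i.+1))); last first.
  move=> i /andP[_ hi]; rewrite ltnS in hi.
  rewrite subSn // hrec ?leq_subr // subKn // scalerDl; congr (_ + _).
  rewrite FpS -scalerBr mulrC -scalerA; congr (_ *: _).
  by rewrite [Fp i * _]mulrC -mulrBl opprB addrA subrK -polyCB mul_polyC.
rewrite big_split /= sumrB.
have -> : \sum_(0 <= i < n.+1) s (n - i)%N *: ((th%:P - 'X) * Fp i) =
  (th%:P - 'X) * \sum_(0 <= i < n.+1) s (n - i)%N *: Fp i.
  by rewrite mulr_sumr; apply: eq_bigr => i _; rewrite scalerAr.
rewrite big_nat_recl // subn0 hbig scale0r add0r.
rewrite [X in _ + (_ - X) + _]big_nat_recr //= subnn h0.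
rewrite (@eq_big_nat _ _ _ 0 n _ (fun i => s (n - i)%N *: Fp i.+1)); last first.
  by move=> i /andP[_ hi]; rewrite subnSK.
by rewrite opprD addrCA addNKr subrK.
Qed.
End PolyStep.


Section Blocks.
Variable F : fieldType.
Variable q : F.
Hypothesis q0 : q != 0.

Lemma kron2_K n (k : F) (B : 'M[F]_n) :
  kron2 (Kmat k) B = block_mx (k *: B) 0 0 (k^-1 *: B).
Proof. by rewrite /kron2 !mxE /= !scale0r. Qed.
Lemma kron2_low n (k : F) (B : 'M[F]_n) :
  kron2 (lowmx k) B = block_mx 0 0 (k *: B) 0.
Proof. by rewrite /kron2 !mxE /= !scale0r. Qed.
Lemma kron2_up n (k : F) (B : 'M[F]_n) :
  kron2 (upmx k) B = block_mx 0 (k *: B) 0 0.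
Proof. by rewrite /kron2 !mxE /= !scale0r. Qed.
Lemma kron2_1 n (B : 'M[F]_n) :
  kron2 1%:M B = block_mx B 0 0 B.
Proof. by rewrite /kron2 !mxE /= !scale0r !scale1r. Qed.

Lemma K1_cons a t : st_K1 q (a :: t) = block_mx (q *: st_K1 q t) 0 0 (q^-1 *: st_K1 q t).
Proof. exact: kron2_K. Qed.
Lemma K0_cons a t : st_K0 q (a :: t) = block_mx (q^-1 *: st_K0 q t) 0 0 (q *: st_K0 q t).
Proof. by rewrite /st_K0 /= /VK0 kron2_K invrK. Qed.

Variables (u v us vs : F).

Lemma R_cons a t : Rop q u v (a :: t) =
  block_mx (Rop q u v t) 0 ((u * q^-1 * a) *: st_K0 q t + (v * q) *: st_K1 q t) (Rop q u v t).
Proof.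
rewrite /Rop /st_e0p /st_e1m /= -/(st_K1 q t) -/(st_K0 q t) -/(st_e0p q t) -/(st_e1m q t).
rewrite K1_cons /Ve0p /Ve1m /VK1inv kron2_low kron2_1 kron2_K kron2_low.
rewrite !add_block_mx mulmx_block !scale_block_mx add_block_mx.
rewrite !(mul0mx, mulmx0, addr0, add0r, scaler0).
rewrite -!scalemxAl -!scalemxAr !scalerA invrK divfK // mulfK // mulr1 mul1mx.
by rewrite !mulrA.
Qed.

Lemma L_cons a t : Lop q us vs (a :: t) =
  block_mx (Lop q us vs t) (us *: st_K1 q t + (vs * (q * a^-1) * q) *: st_K0 q t) 0 (Lop q us vs t).
Proof.
rewrite /Lop /st_e1p /st_e0m /= -/(st_K1 q t) -/(st_K0 q t) -/(st_e1p q t) -/(st_e0m q t).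
rewrite K0_cons /Ve0m /Ve1p /VK0inv kron2_up kron2_1 kron2_K kron2_up.
rewrite !add_block_mx mulmx_block !scale_block_mx add_block_mx.
rewrite !(mul0mx, mulmx0, addr0, add0r, scaler0).
by rewrite -!scalemxAl -!scalemxAr !scalerA divfK // mulfK // mulr1 mul1mx.
Qed.

Lemma K01 t : st_K0 q t *m st_K1 q t = 1%:M /\ st_K1 q t *m st_K0 q t = 1%:M.
Proof.
elim: t => [|a t [IH1 IH2]]; first by rewrite /= mulmx1.
rewrite K0_cons K1_cons !mulmx_block !(mul0mx,mulmx0,addr0,add0r).
rewrite -!scalemxAl -!scalemxAr !scalerA IH1 IH2 mulVf // mulfV // !scale1r.
by rewrite -scalar_mx_block.
Qed.

Lemma R_nil : Rop q u v [::] = 0.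
Proof. by rewrite /Rop /= mul0mx !scaler0 addr0. Qed.
Lemma L_nil : Lop q us vs [::] = 0.
Proof. by rewrite /Lop /= mul0mx !scaler0 addr0. Qed.

Lemma K1R t : st_K1 q t *m Rop q u v t = (q^-1 * q^-1) *: (Rop q u v t *m st_K1 q t).
Proof.
elim: t => [|a t IH]; first by rewrite R_nil mulmx0 mul0mx scaler0.
rewrite K1_cons R_cons !mulmx_block !(mul0mx,mulmx0,addr0,add0r) scale_block_mx.
rewrite -!scalemxAl -!scalemxAr IH !scalerA !mulmxDr !mulmxDl -!scalemxAl -!scalemxAr.
have [h1 h2] := K01 t. rewrite h1 h2 scaler0.
by congr block_mx; congr (_ *: _); first [by rewrite mulrC | by rewrite divfK].
Qed.

Ltac sclose := congr block_mx; congr (_ *: _); first [by rewrite mulrC | by rewrite divfK | by rewrite mulfK | by rewrite mulrCA | idtac].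

Lemma K0R t : st_K0 q t *m Rop q u v t = (q * q) *: (Rop q u v t *m st_K0 q t).
Proof.
elim: t => [|a t IH]; first by rewrite R_nil mulmx0 mul0mx scaler0.
rewrite K0_cons R_cons !mulmx_block !(mul0mx,mulmx0,addr0,add0r) scale_block_mx.
rewrite -!scalemxAl -!scalemxAr IH !scalerA !mulmxDr !mulmxDl -!scalemxAl -!scalemxAr.
have [h1 h2] := K01 t. rewrite h1 h2 scaler0.
by sclose.
Qed.

Lemma K1L t : st_K1 q t *m Lop q us vs t = (q * q) *: (Lop q us vs t *m st_K1 q t).
Proof.
elim: t => [|a t IH]; first by rewrite L_nil mulmx0 mul0mx scaler0.
rewrite K1_cons L_cons !mulmx_block !(mul0mx,mulmx0,addr0,add0r) scale_block_mx.
rewrite -!scalemxAl -!scalemxAr IH !scalerA !mulmxDr !mulmxDl -!scalemxAl -!scalemxAr.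
have [h1 h2] := K01 t. rewrite h1 h2 scaler0.
by sclose.
Qed.

Lemma K0L t : st_K0 q t *m Lop q us vs t = (q^-1 * q^-1) *: (Lop q us vs t *m st_K0 q t).
Proof.
elim: t => [|a t IH]; first by rewrite L_nil mulmx0 mul0mx scaler0.
rewrite K0_cons L_cons !mulmx_block !(mul0mx,mulmx0,addr0,add0r) scale_block_mx.
rewrite -!scalemxAl -!scalemxAr IH !scalerA !mulmxDr !mulmxDl -!scalemxAl -!scalemxAr.
have [h1 h2] := K01 t. rewrite h1 h2 scaler0.
by sclose.
Qed.

Lemma K1u0 t : st_K1 q t *m u0vec t = q ^+ size t *: u0vec t.
Proof.
elim: t => [|a t IH]; first by rewrite /= mulmx1 expr0 scale1r.
rewrite K1_cons /= mul_block_col !(mul0mx,mulmx0,addr0,add0r) -scalemxAl IH scalerA.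
by rewrite scale_col_mx scaler0 exprS.
Qed.
Lemma K0u0 t : st_K0 q t *m u0vec t = (q^-1) ^+ size t *: u0vec t.
Proof.
elim: t => [|a t IH]; first by rewrite /= mulmx1 expr0 scale1r.
rewrite K0_cons /= mul_block_col !(mul0mx,mulmx0,addr0,add0r) -scalemxAl IH scalerA.
by rewrite scale_col_mx scaler0 exprS.
Qed.
End Blocks.

Section Iter.
Variable F : fieldType.

Lemma iter_eig n (K X : 'M[F]_n) c (y : 'cV[F]_n) lam j :
  K *m X = c *: (X *m K) -> K *m y = lam *: y ->
  K *m iter j (fun x => X *m x) y = (lam * c ^+ j) *: iter j (fun x => X *m x) y.
Proof.
move=> hX hy; elim: j => [|j IH] /=; first by rewrite expr0 mulr1.
by rewrite mulmxA hX -scalemxAl -mulmxA IH -scalemxAr scalerA exprS mulrCA mulrA.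
Qed.

Lemma iter_scale n (X : 'M[F]_n) (k : F) (y : 'cV[F]_n) m :
  iter m (fun x => X *m x) (k *: y) = k *: iter m (fun x => X *m x) y.
Proof. by elim: m => [|m IH] //=; rewrite IH scalemxAr. Qed.

Lemma iter_low n (A B : 'M[F]_n) (x0 : 'cV[F]_n) (beta : nat -> F) i :
  (forall j, B *m iter j (fun x => A *m x) x0 = beta j *: iter j (fun x => A *m x) x0) ->
  iter i (fun x => block_mx A 0 B A *m x) (col_mx x0 0) =
  col_mx (iter i (fun x => A *m x) x0) ((\sum_(j < i) beta j) *: iter i.-1 (fun x => A *m x) x0).
Proof.
move=> hB; elim: i => [|i IH]; first by rewrite big_ord0 scale0r.
rewrite [iter i.+1 _ _]/= IH mul_block_col mul0mx addr0 hB -scalemxAr big_ord_recr /=.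
case: i IH => [|i] IH; first by rewrite big_ord0 !scale0r add0r addr0.
by rewrite scalerDl addrC.
Qed.

Lemma iter_up n (A C : 'M[F]_n) (p r : 'cV[F]_n) (k : F) (g : nat -> F) m :
  (forall l, C *m iter l (fun x => A *m x) r = g l *: iter l (fun x => A *m x) r) ->
  iter m (fun x => block_mx A C 0 A *m x) (col_mx p (k *: r)) =
  col_mx (iter m (fun x => A *m x) p + (k * \sum_(l < m) g l) *: iter m.-1 (fun x => A *m x) r)
         (k *: iter m (fun x => A *m x) r).
Proof.
move=> hC; elim: m => [|m IH]; first by rewrite big_ord0 mulr0 scale0r addr0.
rewrite [iter m.+1 _ _]/= IH mul_block_col mul0mx add0r -scalemxAr hC scalerA.
rewrite mulmxDr -!scalemxAr big_ord_recr /=.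
case: m IH => [|m] IH; first by rewrite big_ord0 !mulr0 add0r scale0r addr0.
by rewrite mulrDr scalerDl addrA.
Qed.
End Iter.

Section Zeta.
Variable F : fieldType.
Variable q : F.
Hypothesis q0 : q != 0.
Variables (u v us vs : F).

Local Notation R t := (Rop q u v t).
Local Notation L t := (Lop q us vs t).
Definition iRL t l j := iter l (fun x => L t *m x) (iter j (fun x => R t *m x) (u0vec t)).

Lemma K1_eig t l j : st_K1 q t *m iRL t l j =
  (q ^+ size t * (q^-1 * q^-1) ^+ j * (q * q) ^+ l) *: iRL t l j.
Proof. by rewrite /iRL (iter_eig l (K1L q0 us vs t) (iter_eig j (K1R q0 u v t) (K1u0 q t))). Qed.
Lemma K0_eig t l j : st_K0 q t *m iRL t l j =
  ((q^-1) ^+ size t * (q * q) ^+ j * (q^-1 * q^-1) ^+ l) *: iRL t l j.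
Proof. by rewrite /iRL (iter_eig l (K0L q0 us vs t) (iter_eig j (K0R q0 u v t) (K0u0 q t))). Qed.

Definition beta a (t : seq F) j := u * q^-1 * a * ((q^-1) ^+ size t * (q * q) ^+ j)
   + v * q * (q ^+ size t * (q^-1 * q^-1) ^+ j).
Definition gam a (t : seq F) i l := us * (q ^+ size t * (q^-1 * q^-1) ^+ i * (q * q) ^+ l)
   + vs * (q * a^-1) * q * ((q^-1) ^+ size t * (q * q) ^+ i * (q^-1 * q^-1) ^+ l).

Lemma zeta_cons a t i : zeta q u v us vs (a :: t) i.+1 =
  zeta q u v us vs t i.+1 +
  (\sum_(j < i.+1) beta a t j) * (\sum_(l < i.+1) gam a t i l) * zeta q u v us vs t i.
Proof.
rewrite /zeta R_cons // L_cons // [u0vec _]/=.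
rewrite (@iter_low _ _ _ _ _ (beta a t)); last first.
  move=> j; rewrite mulmxDl -!scalemxAl.
  have := K0_eig t 0 j; have := K1_eig t 0 j; rewrite /iRL /= => -> ->.
  by rewrite !expr0 !mulr1 !scalerA -scalerDl.
rewrite (@iter_up _ _ _ _ _ _ _ (gam a t i)); last first.
  move=> l; rewrite mulmxDl -!scalemxAl.
  have := K0_eig t l i; have := K1_eig t l i; rewrite /iRL /= => -> ->.
  by rewrite !scalerA -scalerDl.
by rewrite tr_col_mx mul_row_col trmx0 mul0mx addr0 mulmxDr -scalemxAr !mxE.
Qed.

Lemma zeta0 s : zeta q u v us vs s 0 = 1.
Proof.
rewrite /zeta /=; elim: s => [|a t IH]; first by rewrite /= trmx1 mulmx1 mxE.
by rewrite [u0vec _]/= tr_col_mx mul_row_col trmx0 mul0mx addr0.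
Qed.

Lemma zeta_big s i : (size s < i)%N -> zeta q u v us vs s i = 0.
Proof.
elim: s i => [|a t IH] [|i] //=.
  by move=> _; rewrite /zeta /= R_nil L_nil !mul0mx mulmx0 mxE.
move=> hi; rewrite zeta_cons (IH i.+1) ?(IH i) ?mulr0 ?addr0 //; exact: ltnW.
Qed.
End Zeta.

Section Sigma.
Variable F : fieldType.
Add Field Ffld : (Ffield F).
Ltac toPz := match goal with |- ?x = ?y => change (@eq (GRing.PzSemiRing.sort F) x y) end.
Variable q : F.
Hypothesis q0 : q != 0.
Hypothesis hq2 : q ^+ 2 != 1.
Variables (u v us vs b c bs cs : F).
Hypotheses (hb : b != 0) (hc : c != 0) (hbs : bs != 0) (hcs : cs != 0).
Hypothesis huv : u * vs = - (b * bs * q^-1 * (q - q^-1) ^+ 2).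
Hypothesis hvu : v * us = - (c * cs * q^-1 * (q - q^-1) ^+ 2).

Definition Pd i := \prod_(1 <= k < i.+1) (q ^+ k - q ^- k) ^+ 2.

Lemma sigma0 s : sigma q u v us vs s 0 = 1.
Proof. by rewrite /sigma zeta0 big_geq // divr1. Qed.

Lemma sigma_big s i : (size s < i)%N -> sigma q u v us vs s i = 0.
Proof. by move=> h; rewrite /sigma zeta_big // mul0r. Qed.

Lemma sigma_cons a t i : Pd i.+1 != 0 ->
  sigma q u v us vs (a :: t) i.+1 = sigma q u v us vs t i.+1 +
  ((\sum_(j < i.+1) beta q u v a t j) * (\sum_(l < i.+1) gam q us vs a t i l)
     / (q ^+ i.+1 - q ^- i.+1) ^+ 2) * sigma q u v us vs t i.
Proof.
rewrite /sigma /Pd zeta_cons // big_nat_recr //= mulf_eq0 negb_or => /andP[h1 h2].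
move: h1 h2; set P := \prod_(1 <= k < i.+1) _; set X := (_ ^+ 2).
move=> /eqP h1 /eqP h2. set Sb := \sum_(j < _) _; set Sg := \sum_(l < _) _.
foldF. toPz. field. by split.
Qed.

Definition theta a := (u * us * q^-1 * a + v * vs * (q * q * q) * a^-1) / ((q - q^-1) * (q - q^-1)).
Definition phi j := b * bs * q ^- (2 * j) + c * cs * q ^+ (2 * j).

Lemma D0 : q - q^-1 != 0.
Proof.
apply: contra hq2; rewrite subr_eq0 => /eqP h.
by rewrite expr2 {1}h mulVf.
Qed.

Lemma u0 : u != 0.
Proof.
apply/eqP=> h; move: huv; rewrite h mul0r => /eqP; rewrite eq_sym oppr_eq0 !mulf_eq0 invr_eq0.
by rewrite (negbTE hb) (negbTE hbs) (negbTE q0) (negbTE D0).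
Qed.
Lemma v0 : v != 0.
Proof.
apply/eqP=> h; move: hvu; rewrite h mul0r => /eqP; rewrite eq_sym oppr_eq0 !mulf_eq0 invr_eq0.
by rewrite (negbTE hc) (negbTE hcs) (negbTE q0) (negbTE D0).
Qed.

Lemma geom (x : F) m : x - 1 != 0 -> \sum_(j < m) x ^+ j = (x ^+ m - 1) / (x - 1).
Proof. by move=> h; rewrite subrX1 [(_ - 1) * _]mulrC mulfK. Qed.

Lemma rho_eq a t i : a != 0 -> (i <= size t)%N -> q ^+ i.+1 - q ^- i.+1 != 0 ->
  (\sum_(j < i.+1) beta q u v a t j) * (\sum_(l < i.+1) gam q us vs a t i l)
     / (q ^+ i.+1 - q ^- i.+1) ^+ 2 = theta a - phi (size t - i).
Proof.
move=> a0 hi hm.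
have hvs : vs = - (b * bs * q^-1 * ((q - q^-1) * (q - q^-1))) / u.
  by rewrite -expr2 -huv mulrC mulKf // u0.
have hus : us = - (c * cs * q^-1 * ((q - q^-1) * (q - q^-1))) / v.
  by rewrite -expr2 -hvu mulrC mulKf // v0.
have qq1 : q * q - 1 != 0 by rewrite subr_eq0 -expr2.
have qq1' : q^-1 * q^-1 - 1 != 0.
  by rewrite subr_eq0 -invfM invr_eq1 -expr2.
rewrite /beta /gam big_split /= -!mulr_sumr big_split /= -!mulr_sumr !geom //.
rewrite /theta /phi; set k := (size t - i)%N.
have hn : size t = (k + i)%N by rewrite /k subnK.
rewrite hn mul2n -addnn !exprD !exprMn !exprVn !exprSr ?expr1.
move: hm; rewrite !exprSr ?expr1 => hm.
set X := q ^+ i; set Y := q ^+ k.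
have X0 : X != 0 by rewrite expf_neq0.
have Y0 : Y != 0 by rewrite expf_neq0.
have hm2 : X * q * (X * q) - 1 != 0.
  apply: contra hm; rewrite subr_eq0 => /eqP h; rewrite subr_eq0; apply/eqP.
  by rewrite -[RHS]mulr1 -h mulKf // mulf_neq0.
move/eqP: hm2 => hm2.
rewrite hvs hus.
move/eqP: X0 => X0; move/eqP: Y0 => Y0; move/eqP: hm => hm; move/eqP: q0 => q0'; move/eqP: a0 => a0'.
have := u0; move/eqP=> u0'; have := v0; move/eqP=> v0'; have := D0; move/eqP=> D0'.
move/eqP: qq1 => qq1e; move/eqP: qq1' => qq1e'.
rewrite expr0 mul1r. foldF. toPz. field.
rewrite /subF /mulF /zeroF; do ! split => //.
by apply/eqP; rewrite -oppr_eq0 opprB; apply/eqP.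
Qed.

Lemma feas_ne0 n m : feasible q n -> (1 <= m <= n)%N -> q ^+ m - q ^- m != 0.
Proof.
move=> hf hm; have := hf m hm; apply: contra; rewrite subr_eq0 => /eqP h.
by rewrite mulnC exprM expr2 {1}h mulVf // expf_neq0.
Qed.

Lemma drin_cons a t : a != 0 -> feasible q (size t).+1 ->
  drinfeld_poly q u v us vs b c bs cs (a :: t) =
  ('X - (theta a)%:P) * drinfeld_poly q u v us vs b c bs cs t.
Proof.
move=> a0 hf; rewrite /drinfeld_poly [size _]/=.
have := @poly_step F (sigma q u v us vs t) (sigma q u v us vs (a :: t)) phi (theta a) (size t).
rewrite /phi /fpoly => ->.
- by rewrite exprS -scalerA scaleN1r scalerAr -mulNr opprB.
- by rewrite sigma_big.
- by rewrite !sigma0.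
move=> i hi; rewrite sigma_cons; last first.
  rewrite /Pd prodf_seq_neq0; apply/allP => k; rewrite mem_index_iota => hk /=.
  move/andP: hk => [k1 k2]; rewrite expf_neq0 // (feas_ne0 hf) // k1 /= -ltnS (leq_trans k2) // !ltnS.
by rewrite rho_eq // (feas_ne0 hf) // ltnS.
Qed.

Lemma drin_prod s : all (fun a => a != 0) s -> feasible q (size s) ->
  drinfeld_poly q u v us vs b c bs cs s = \prod_(a <- s) ('X - (theta a)%:P).
Proof.
elim: s => [|a t IH] /=.
  move=> _ _; rewrite /drinfeld_poly /= big_nil expr0 scale1r big_ord_recr big_ord0 /= add0r.
  by rewrite big_ord0 sigma0 scale1r.
move=> /andP[a0 ha] hf; rewrite drin_cons // IH // ?big_cons //.
by move=> k /andP[k1 kn]; apply: hf; rewrite k1 ltnW.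
Qed.

End Sigma.

Section ThetaSub.
Variable F : fieldType.
Add Field FfldT : (Ffield F).
Lemma theta_sub_gen (q u v us vs a z : F) : q != 0 -> a != 0 -> u != 0 -> us != 0 ->
  q * q - 1 != 0 ->
  (u * us * q^-1 * a + v * vs * (q * q * q) * a^-1) / ((q - q^-1) * (q - q^-1)) - z =
  (u * us * q^-1 * (a * a - (- (v * vs * (q * q * q)) / (u * us * q^-1) +
      z * ((q - q^-1) * (q - q^-1)) / (u * us * q^-1) * a))) / (a * ((q - q^-1) * (q - q^-1))).
Proof.
move=> /eqP q0 /eqP a0 /eqP u0 /eqP us0 /eqP qq.
foldF. match goal with |- ?x = ?y => change (@eq (GRing.PzSemiRing.sort F) x y) end.
field. rewrite /subF /mulF /zeroF; do ! split => //.
Qed.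
End ThetaSub.

Section Main.
Variable F : closedFieldType.
Add Field FfldC : (Ffield F).
Ltac toPz := match goal with |- ?x = ?y => change (@eq (GRing.PzSemiRing.sort F) x y) end.
Variable q : F.
Hypothesis q0 : q != 0.
Hypothesis hq2 : q ^+ 2 != 1.
Variables (u v us vs b c bs cs : F).
Hypotheses (hb : b != 0) (hc : c != 0) (hbs : bs != 0) (hcs : cs != 0).
Hypothesis huv : u * vs = - (b * bs * q^-1 * (q - q^-1) ^+ 2).
Hypothesis hvu : v * us = - (c * cs * q^-1 * (q - q^-1) ^+ 2).

Lemma theta_onto z : exists a, a != 0 /\ theta q u v us vs a = z.
Proof.
have D0' := D0 q0 hq2.
have us0 : us != 0.
  apply/eqP=> h; move: hvu; rewrite h mulr0 => /eqP; rewrite eq_sym oppr_eq0 !mulf_eq0 invr_eq0.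
  by rewrite (negbTE hc) (negbTE hcs) (negbTE q0) (negbTE D0').
have vs0 : vs != 0.
  apply/eqP=> h; move: huv; rewrite h mulr0 => /eqP; rewrite eq_sym oppr_eq0 !mulf_eq0 invr_eq0.
  by rewrite (negbTE hb) (negbTE hbs) (negbTE q0) (negbTE D0').
have u0' := u0 q0 hq2 hb hbs huv.
have v0' := v0 q0 hq2 hc hcs hvu.
set A := u * us * q^-1; set B := v * vs * (q * q * q).
have A0 : A != 0 by rewrite !mulf_neq0 // invr_neq0.
have B0 : B != 0 by rewrite !mulf_neq0.
set DD := (q - q^-1) * (q - q^-1).
have DD0 : DD != 0 by rewrite mulf_neq0.
have [a ha] := @solve_monicpoly F 2 (nth 0 [:: - B / A; z * DD / A]) isT.
move: ha; rewrite !big_ord_recr big_ord0 /= add0r expr0 expr1 mulr1 => ha.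
have a0 : a != 0.
  apply/eqP=> h; move: ha; rewrite h expr2 mul0r mulr0 addr0 => /eqP.
  by rewrite eq_sym mulf_eq0 oppr_eq0 invr_eq0 (negbTE A0) (negbTE B0).
exists a; split => //.
apply/eqP; rewrite -subr_eq0; apply/eqP.
have -> : theta q u v us vs a - z = (A * (a ^+ 2 - (- B / A + z * DD / A * a))) / (a * DD).
  by rewrite /theta theta_sub_gen // ?expr2 // subr_eq0 -expr2.
by rewrite ha subrr mulr0 mul0r.
Qed.

Lemma pick_list (r : seq F) : exists s, [/\ size s = size r, all (fun a => a != 0) s &
  map (theta q u v us vs) s = r].
Proof.
elim: r => [|z r [s [h1 h2 h3]]]; first by exists [::].
have [a [a0 ha]] := theta_onto z.
by exists (a :: s); rewrite /= h1 a0 h2 ha h3.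
Qed.
End Main.

Unset Implicit Arguments. Set Strict Implicit.

Theorem proposition7p16 (F : closedFieldType) (q : F)
  (b c bs cs u v us vs : F) :
  q != 0 -> q ^+ 2 != 1 ->
  b != 0 -> c != 0 -> bs != 0 -> cs != 0 ->
  u * vs = - (b * bs * q^-1 * (q - q^-1) ^+ 2) ->
  v * us = - (c * cs * q^-1 * (q - q^-1) ^+ 2) ->
  forall (d : nat) (P : {poly F}),
    feasible q d -> P \is monic -> size P = d.+1 ->
    exists s : seq F,
      [/\ size s = d, all (fun a => a != 0) s &
          drinfeld_poly q u v us vs b c bs cs s = P].
Proof.
move=> q0 hq2 hb hc hbs hcs huv hvu d P hf hmon hsz.
have [r hr] := closed_field_poly_normal P.
rewrite (monicP hmon) scale1r in hr.
have [s [hs1 hs2 hs3]] := pick_list q0 hq2 hb hc hbs hcs huv hvu r.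
have hsd : size s = d.
  by move: hsz; rewrite hr size_prod_XsubC hs1 => -[].
exists s; split => //.
rewrite drin_prod //; last by rewrite hsd.
by rewrite -(big_map (theta q u v us vs) xpredT (fun z => 'X - z%:P)) hs3 -hr.
Qed.
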